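(* Let $k,m$ be integers with $k\geqslant 2$ and $m>2k$, and let $n=2k-2$. Then $\alpha(m,n,k)=h(m,n,k)$. Moreover, every $(m,2k-2,k)$-intersecting family of maximum cardinality is of the form \[ \binom{[2k-2]}{k}\cup\{F\cup\{b\}\mid F\in\mathcal{F}^*,\ b\in[2k-1,m]\}, \] where $\mathcal{F}^*$ is an intersecting family of $(k-1)$-subsets of $[2k-2]$ of maximum cardinality.
   Context: For positive integers $a\leqslant b$, $[a,b]=\{a,a+1,\dots,b\}$ and $[a]=[1,a]$; $\binom{X}{k}$ denotes the family of all $k$-subsets of a set $X$. A family of sets is intersecting if no two of its members are disjoint. For integers $0<k\leqslant n<2k<m$, an $(m,n,k)$-intersecting family is an intersecting family $\mathcal{F}$ with $\binom{[n]}{k}\subseteq\mathcal{F}\subseteq\binom{[m]}{k}$, and $\alpha(m,n,k)$ is the maximum cardinality of an $(m,n,k)$-intersecting family. Define $h(m,n,k)=\binom{n}{k}+\sum_{i=1}^{2k-n-1}\binom{n-1}{k-i-1}\binom{m-n}{i}$. *)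

(* Defs.v *)
(* Ground set [m] = {1..m} is modelled by 'I_m, where the
   ordinal i stands for the integer i+1. Hence [a] = {i : 'I_m | i < a}
   and [a,b] = {i : 'I_m | a-1 <= i < b}. *)
From mathcomp Require Import all_boot.
Set Implicit Arguments. Unset Strict Implicit. Unset Printing Implicit Defensive.

Definition intersecting (T : finType) (F : {set {set T}}) : bool :=
  [forall A in F, forall B in F, A :&: B != set0].

Definition seg (m a : nat) : {set 'I_m} := [set i : 'I_m | i < a].

Arguments seg : clear implicits.

Definition ksubsets (m a k : nat) : {set {set 'I_m}} :=
  [set A : {set 'I_m} | (#|A| == k) && (A \subset seg m a)].

Arguments ksubsets : clear implicits.

Definition mnk_intersecting (m n k : nat) (F : {set {set 'I_m}}) : bool :=
  [&& intersecting F, ksubsets m n k \subset F & F \subset ksubsets m m k].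

Arguments mnk_intersecting : clear implicits.

Definition alpha (m n k : nat) : nat :=
  \max_(F : {set {set 'I_m}} | mnk_intersecting m n k F) #|F|.

Definition h (m n k : nat) : nat :=
  'C(n, k) + \sum_(1 <= i < 2 * k - n) 'C(n - 1, k - i - 1) * 'C(m - n, i).

(* Main.v *)
Require Import Defs.
From mathcomp Require Import all_boot zify.
Set Implicit Arguments. Unset Strict Implicit. Unset Printing Implicit Defensive.

Definition Ob m n : {set 'I_m} := [set b : 'I_m | n <= b].
Definition cnt m n (F : {set {set 'I_m}}) (B : {set 'I_m}) :=
  #|[set b in Ob m n | B :|: [set b] \in F]|.
Arguments cnt : clear implicits.
Arguments Ob : clear implicits.

Lemma inO m n (b : 'I_m) : (b \in Ob m n) = (b \notin seg m n).
Proof. by rewrite !inE -leqNgt. Qed.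

Lemma card_seg m n : n <= m -> #|seg m n| = n.
Proof.
move=> H.
have -> : seg m n = [set widen_ord H i | i in 'I_n].
  apply/setP=> i; rewrite !inE; apply/idP/imsetP.
    move=> hi; exists (Ordinal hi) => //; exact: val_inj.
  by case=> j _ ->; rewrite /= ltn_ord.
rewrite card_imset ?card_ord //.
by move=> i j /(congr1 val) /= /val_inj.
Qed.

Lemma card_Ob m n : n <= m -> #|Ob m n| = m - n.
Proof.
move=> H.
have -> : Ob m n = ~: seg m n by apply/setP=> i; rewrite inO !inE.
have := cardsC (seg m n). rewrite card_ord card_seg //. lia.
Qed.

Lemma dec_set m n (B : {set 'I_m}) b :
  B \subset seg m n -> b \notin seg m n ->
  (B :|: [set b]) :&: seg m n = B /\ (B :|: [set b]) :\: seg m n = [set b].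
Proof.
move=> hB hb; have hB' := subsetP hB.
split; apply/setP=> x; rewrite ?in_setI ?in_setD in_setU in_set1.
  case: (boolP (x \in B)) => xB /=; first by rewrite hB'.
  by case: eqP => // ->; rewrite (negbTE hb).
case: (boolP (x \in B)) => xB /=.
  rewrite hB' //=; case: eqP => // e; move: xB; rewrite e => /hB'.
  by rewrite (negbTE hb).
by case: eqP => [->|]; rewrite ?hb ?andbF.
Qed.

Lemma card_U1 m (B : {set 'I_m}) b : b \notin B -> #|B :|: [set b]| = #|B|.+1.
Proof. by move=> hb; rewrite setUC cardsU1 hb. Qed.

Lemma exists_sub (T : finType) (X : {set T}) k : k <= #|X| ->
  exists C : {set T}, C \subset X /\ #|C| = k.
Proof.
move=> H.
have : 0 < #|[set A : {set T} | A \subset X & #|A| == k]| by rewrite cards_draws bin_gt0.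
rewrite card_gt0 => /set0Pn [C]; rewrite inE => /andP [h1 /eqP h2]; by exists C.
Qed.

Lemma meet_card (T : finType) (S A B : {set T}) :
  A \subset S -> B \subset S -> #|S| < #|A| + #|B| -> A :&: B != set0.
Proof.
move=> hA hB hc; apply/negP => /eqP h0.
have := cardsU A B; rewrite h0 cards0 subn0 => e.
have : #|A :|: B| <= #|S| by apply: subset_leq_card; rewrite subUset hA.
lia.
Qed.

Lemma inter_pair (T : finType) (F : {set {set T}}) A B :
  intersecting F -> A \in F -> B \in F -> A :&: B != set0.
Proof.
move=> /forallP /(_ A) /implyP H hA hB.
by move: (H hA) => /forallP /(_ B) /implyP; apply.
Qed.

Lemma in_ks m a k (A : {set 'I_m}) : (A \in ksubsets m a k) = (#|A| == k) && (A \subset seg m a).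
Proof. by rewrite /ksubsets inE. Qed.

Lemma struct m n k (F : {set {set 'I_m}}) A :
  n <= m -> n + 2 = k + k ->
  intersecting F -> ksubsets m n k \subset F -> F \subset ksubsets m m k ->
  A \in F -> A \notin ksubsets m n k ->
  A :&: seg m n \in ksubsets m n k.-1 /\
  exists b, b \in Ob m n /\ A = (A :&: seg m n) :|: [set b].
Proof.
move=> Hnm Hn HI HK HFs hA hAK.
have cA : #|A| = k by move: (subsetP HFs A hA); rewrite in_ks => /andP [/eqP].
have hs := cardsID (seg m n) A.
have hs2 := cardsID A (seg m n).
have cS := card_seg Hnm.
case E : #|A :\: seg m n| => [|[|d]].
- exfalso; move: hAK; rewrite in_ks cA eqxx /=.
  by move/eqP: E; rewrite cards_eq0 setD_eq0 => ->.
- move/eqP: E => /cards1P [b Eb].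
  split.
    rewrite in_ks subsetIr andbT; apply/eqP; rewrite Eb cards1 in hs; lia.
  exists b; split.
    rewrite inO; have : b \in A :\: seg m n by rewrite Eb set11.
    by rewrite in_setD => /andP [].
  by rewrite -Eb setID.
- exfalso.
  have [C [hC cC]] : exists C : {set 'I_m}, C \subset seg m n :\: A /\ #|C| = k.
    apply: exists_sub; rewrite setIC in hs; lia.
  have CK : C \in F.
    apply: (subsetP HK); rewrite in_ks cC eqxx /=.
    exact: subset_trans hC (subsetDl _ _).
  have := inter_pair HI CK hA; apply/negP; rewrite negbK.
  apply/eqP/setP => x; rewrite in_setI in_set0.
  case xC: (x \in C) => //=.
  by have := subsetP hC x xC; rewrite in_setD => /andP [/negbTE -> _].
Qed.

Lemma count_F m n k (F : {set {set 'I_m}}) :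
  n <= m -> n + 2 = k + k ->
  intersecting F -> ksubsets m n k \subset F -> F \subset ksubsets m m k ->
  #|F| = #|ksubsets m n k| + \sum_(B in ksubsets m n k.-1) cnt m n F B.
Proof.
move=> Hnm Hn HI HK HFs.
have := cardsID (ksubsets m n k) F; rewrite (setIidPr HK) => <-; congr (_ + _).
rewrite -sum1_card (partition_big (fun A => A :&: seg m n) (mem (ksubsets m n k.-1))) /=; last first.
  move=> A; rewrite in_setD => /andP [hAK hA].
  by have [] := struct Hnm Hn HI HK HFs hA hAK.
apply: eq_bigr => B hB; rewrite sum1_card.
have hBs : B \subset seg m n by move: hB; rewrite in_ks => /andP [].
rewrite /cnt -(card_in_imset (f := fun b => B :|: [set b])); last first.
  move=> b b'; rewrite !inE => /andP [hb _] /andP [hb' _] e.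
  have {}hb : b \notin seg m n by rewrite /seg inE -leqNgt.
  have {}hb' : b' \notin seg m n by rewrite /seg inE -leqNgt.
  have [_ e1] := dec_set hBs hb; have [_ e2] := dec_set hBs hb'.
  by apply/set1_inj; rewrite -e1 -e2 e.
apply: eq_card => A.
apply/andP/imsetP.
  move=> [hA1 /eqP hA2]; move: hA1; rewrite in_setD => /andP [hAK hA].
  have [_ [b [hb eA]]] := struct Hnm Hn HI HK HFs hA hAK.
  exists b; last by rewrite -hA2.
  by rewrite inE hb -hA2 -eA hA.
move=> [b]; rewrite inE => /andP [hb hbF] ->.
have hb2 : b \notin seg m n by rewrite -inO.
have [e1 _] := dec_set hBs hb2.
rewrite e1 eqxx in_setD hbF andbT; split => //; rewrite in_ks negb_and; apply/orP; right.
apply/negP => /subsetP /(_ b); rewrite in_setU set11 orbT => /(_ isT).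
by rewrite (negbTE hb2).
Qed.

Lemma cnt_le m n F B : n <= m -> cnt m n F B <= m - n.
Proof.
move=> H; rewrite -card_Ob //.
by apply: subset_leq_card; apply/subsetP => x; rewrite inE => /andP [].
Qed.
Arguments cnt_le : clear implicits.

Lemma pair_eq m n (F : {set {set 'I_m}}) (B : {set 'I_m}) (x y : 'I_m) :
  intersecting F -> B \subset seg m n ->
  x \in [set b in Ob m n | B :|: [set b] \in F] ->
  y \in [set b in Ob m n | (seg m n :\: B) :|: [set b] \in F] -> x = y.
Proof.
move=> HI hBs; rewrite !inE => /andP [hx hxF] /andP [hy hyF].
have hx' : x \notin seg m n by rewrite /seg inE -leqNgt.
have hy' : y \notin seg m n by rewrite /seg inE -leqNgt.
have /set0Pn [z] := inter_pair HI hxF hyF.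
rewrite !in_setI !in_setU !in_set1 in_setD.
move=> /andP [/orP [zB | /eqP zx] /orP [/andP [zB' zS] | /eqP zy]].
- by rewrite zB in zB'.
- by move: hy'; rewrite -zy (subsetP hBs).
- by move: hx'; rewrite -zx zS.
- by rewrite -zx -zy.
Qed.

Lemma pair_cases m n (F : {set {set 'I_m}}) (B : {set 'I_m}) :
  intersecting F -> B \subset seg m n ->
  [\/ cnt m n F B = 0, cnt m n F (seg m n :\: B) = 0 |
      cnt m n F B <= 1 /\ cnt m n F (seg m n :\: B) <= 1].
Proof.
move=> HI hBs; rewrite /cnt.
set X1 := [set b in Ob m n | B :|: [set b] \in F].
set X2 := [set b in Ob m n | (seg m n :\: B) :|: [set b] \in F].
case: (set_0Vmem X1) => [->|[x hx]]; first by constructor 1; rewrite cards0.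
case: (set_0Vmem X2) => [->|[y hy]]; first by constructor 2; rewrite cards0.
constructor 3; split.
  rewrite -(cards1 y); apply: subset_leq_card; apply/subsetP => x' hx'.
  by rewrite in_set1 (pair_eq HI hBs hx' hy).
rewrite -(cards1 x); apply: subset_leq_card; apply/subsetP => y' hy'.
by rewrite in_set1 (pair_eq HI hBs hx hy').
Qed.

Lemma sum_eq_le (I : finType) (P : pred I) (f g : I -> nat) :
  (forall i, P i -> f i <= g i) ->
  \sum_(i | P i) f i = \sum_(i | P i) g i -> forall i, P i -> f i = g i.
Proof.
move=> H E i Pi; apply/eqP; rewrite eqn_leq H //= leqNgt; apply/negP => lt.
move: E; rewrite (bigD1 i) //= [X in _ = X](bigD1 i) //=.
have : \sum_(j | P j && (j != i)) f j <= \sum_(j | P j && (j != i)) g j.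
  by apply: leq_sum => j /andP [Pj _]; apply: H.
lia.
Qed.

Lemma compl_ks m n k (B : {set 'I_m}) : n + 2 = k + k -> n <= m ->
  B \in ksubsets m n k.-1 ->
  seg m n :\: B \in ksubsets m n k.-1 /\ seg m n :\: (seg m n :\: B) = B.
Proof.
move=> Hn Hnm; rewrite in_ks => /andP [/eqP cB hBs]; split.
  rewrite in_ks subsetDl andbT cardsD (setIidPr hBs) card_seg // cB; apply/eqP; lia.
apply/setP => x; rewrite !in_setD.
case xB: (x \in B) => /=; last by rewrite andNb.
by rewrite (subsetP hBs).
Qed.

Lemma sum_compl m n k (f : {set 'I_m} -> nat) : n + 2 = k + k -> n <= m ->
  \sum_(B in ksubsets m n k.-1) f (seg m n :\: B) = \sum_(B in ksubsets m n k.-1) f B.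
Proof.
move=> Hn Hnm.
rewrite -(big_imset f (h := fun B => seg m n :\: B)); last first.
  move=> B B' hB hB' e.
  by rewrite -(compl_ks Hn Hnm hB).2 -(compl_ks Hn Hnm hB').2 e.
apply: eq_bigl => B; apply/imsetP/idP.
  by case=> B' hB' ->; have [] := compl_ks Hn Hnm hB'.
move=> hB; exists (seg m n :\: B); first by have [] := compl_ks Hn Hnm hB.
by rewrite (compl_ks Hn Hnm hB).2.
Qed.

Lemma upper m n k (F : {set {set 'I_m}}) : n + 2 = k + k -> n <= m ->
  2 <= m - n -> intersecting F ->
  2 * \sum_(B in ksubsets m n k.-1) cnt m n F B <= (m - n) * #|ksubsets m n k.-1|.
Proof.
move=> Hn Hnm HO HI.
rewrite mul2n -addnn -{2}(sum_compl (cnt m n F) Hn Hnm) -big_split /=.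
rewrite mulnC -sum_nat_const; apply: leq_sum => B hB.
have hBs : B \subset seg m n by move: hB; rewrite in_ks => /andP [].
have := cnt_le m n F B Hnm; have := cnt_le m n F (seg m n :\: B) Hnm.
by case: (pair_cases HI hBs) => [->|->|[]]; lia.
Qed.

Lemma extremal m n k (F : {set {set 'I_m}}) : n + 2 = k + k -> n <= m ->
  3 <= m - n -> intersecting F ->
  2 * \sum_(B in ksubsets m n k.-1) cnt m n F B = (m - n) * #|ksubsets m n k.-1| ->
  forall B, B \in ksubsets m n k.-1 -> cnt m n F B = 0 \/ cnt m n F B = m - n.
Proof.
move=> Hn Hnm HO HI E.
have E2 : \sum_(B in ksubsets m n k.-1) (cnt m n F B + cnt m n F (seg m n :\: B))
         = \sum_(B in ksubsets m n k.-1) (m - n).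
  by rewrite big_split /= (sum_compl (cnt m n F) Hn Hnm) addnn -mul2n E sum_nat_const mulnC.
move=> B hB.
have hBs : B \subset seg m n by move: hB; rewrite in_ks => /andP [].
have H : forall B, B \in ksubsets m n k.-1 ->
    cnt m n F B + cnt m n F (seg m n :\: B) <= m - n.
  move=> B' hB'.
  have hBs' : B' \subset seg m n by move: hB'; rewrite in_ks => /andP [].
  have := cnt_le m n F B' Hnm; have := cnt_le m n F (seg m n :\: B') Hnm.
  by case: (pair_cases HI hBs') => [->|->|[]]; lia.
have := sum_eq_le H E2 hB.
have := cnt_le m n F B Hnm; have := cnt_le m n F (seg m n :\: B) Hnm.
by case: (pair_cases HI hBs) => [->|->|[]]; lia.
Qed.

Definition Fam m n k (Fs : {set {set 'I_m}}) : {set {set 'I_m}} :=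
  ksubsets m n k :|: [set A :|: [set b] | A in Fs, b in Ob m n].
Arguments Fam : clear implicits.

Lemma notseg m n (b : 'I_m) : n <= b -> b \notin seg m n.
Proof. by rewrite /seg inE -leqNgt. Qed.

Lemma ne_sub (T : finType) (X Y : {set T}) : X != set0 -> X \subset Y -> Y != set0.
Proof.
move=> /set0Pn [x hx] /subsetP H; apply/set0Pn; exists x; exact: H.
Qed.

Lemma card_ks m n k : n <= m -> #|ksubsets m n k| = 'C(n, k).
Proof.
move=> H; rewrite -{2}(card_seg H) -cards_draws; apply: eq_card => A.
by rewrite !inE andbC.
Qed.

Lemma fam_cases m n k Fs A : A \in Fam m n k Fs ->
  A \in ksubsets m n k \/ exists B (b : 'I_m), [/\ B \in Fs, n <= b & A = B :|: [set b]].
Proof.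
rewrite in_setU => /orP [h|/imset2P [B b hB]]; first by left.
by rewrite inE => hb ->; right; exists B, b.
Qed.

Lemma fam_mnk m n k (Fs : {set {set 'I_m}}) : n + 2 = k + k -> n <= m ->
  Fs \subset ksubsets m n k.-1 -> intersecting Fs ->
  mnk_intersecting m n k (Fam m n k Fs).
Proof.
move=> Hn Hnm HFs HI.
have cS := card_seg Hnm.
have ksub : forall A, A \in ksubsets m n k -> A \subset seg m n /\ #|A| = k.
  by move=> A; rewrite in_ks => /andP [/eqP -> ->].
have fsub : forall A, A \in Fs -> A \subset seg m n /\ #|A| = k.-1.
  by move=> A /(subsetP HFs); rewrite in_ks => /andP [/eqP -> ->].
apply/and3P; split; last first.
- apply/subsetP => A /fam_cases [/ksub [_ cA] | [B [b [hB hb ->]]]].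
    by rewrite in_ks cA eqxx; apply/subsetP => x _; rewrite /seg inE ltn_ord.
  have [hBs cB] := fsub B hB.
  rewrite in_ks card_U1; last by apply: contra (notseg hb); apply: (subsetP hBs).
  rewrite cB; apply/andP; split; first by apply/eqP; lia.
  by apply/subsetP => x _; rewrite /seg inE ltn_ord.
- exact: subsetUl.
apply/forallP => A; apply/implyP => hA; apply/forallP => A'; apply/implyP => hA'.
case: (fam_cases hA) => [/ksub [sA cA] | [B [b [hB hb ->]]]];
case: (fam_cases hA') => [/ksub [sA' cA'] | [B' [b' [hB' hb' ->]]]].
- by apply: meet_card sA sA' _; lia.
- have [hBs cB] := fsub B' hB'.
  apply: ne_sub (meet_card sA hBs _) _; first by lia.
  by apply: setIS; apply: subsetUl.
- have [hBs cB] := fsub B hB.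
  apply: ne_sub (meet_card hBs sA' _) _; first by lia.
  by apply: setSI; apply: subsetUl.
- apply: ne_sub (inter_pair HI hB hB') _.
  by apply: setISS; apply: subsetUl.
Qed.

Lemma cnt_fam m n k (Fs : {set {set 'I_m}}) B : n <= m ->
  Fs \subset ksubsets m n k.-1 -> B \in ksubsets m n k.-1 ->
  cnt m n (Fam m n k Fs) B = if B \in Fs then m - n else 0.
Proof.
move=> Hnm HFs hB.
have hBs : B \subset seg m n by move: hB; rewrite in_ks => /andP [].
have key : forall b : 'I_m, n <= b -> (B :|: [set b] \in Fam m n k Fs) = (B \in Fs).
  move=> b hb; apply/idP/idP.
    move/fam_cases => [hK | [B' [b' [hB' hb' e]]]].
      exfalso; move: hK; rewrite in_ks => /andP [_ /subsetP /(_ b)].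
      by rewrite in_setU set11 orbT => /(_ isT); apply/negP; apply: notseg.
    have hB's : B' \subset seg m n by move: (subsetP HFs B' hB'); rewrite in_ks => /andP [].
    have [e1 _] := dec_set hBs (notseg hb); have [e2 _] := dec_set hB's (notseg hb').
    by rewrite -e1 e e2.
  move=> hBF; rewrite in_setU; apply/orP; right; apply/imset2P; exists B b => //.
  by rewrite inE.
have hO : forall b : 'I_m, b \in Ob m n -> n <= b by move=> b; rewrite inE.
rewrite /cnt; case: ifP => hBF.
  rewrite -card_Ob //; apply: eq_card => b; rewrite in_set.
  by case: (boolP (b \in Ob m n)) => //= hb; rewrite key ?hO.
apply/eqP; rewrite cards_eq0; apply/eqP/setP => b; rewrite in_set in_set0.
by case: (boolP (b \in Ob m n)) => //= hb; rewrite key ?hO ?hBF.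
Qed.

Lemma sum_if m n k (Fs : {set {set 'I_m}}) t :
  Fs \subset ksubsets m n k.-1 ->
  \sum_(B in ksubsets m n k.-1) (if B \in Fs then t else 0) = #|Fs| * t.
Proof.
move=> HFs; rewrite -big_mkcondr /= -sum_nat_const; apply: eq_bigl => B.
by case: (boolP (B \in Fs)) => h; rewrite ?andbT ?andbF // (subsetP HFs).
Qed.

Lemma star_props m n k (x0 : 'I_m) : n + 2 = k + k -> 2 <= k -> n <= m -> x0 < n ->
  let St := [set B in ksubsets m n k.-1 | x0 \in B] in
  [/\ St \subset ksubsets m n k.-1, intersecting St & #|St| = 'C(n.-1, k.-2)].
Proof.
case: k => [|[|j]] // Hn Hk Hnm hx0 St; rewrite /= in St *.
have x0S : x0 \in seg m n by rewrite /seg inE.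
split.
- by apply/subsetP => B; rewrite inE => /andP [].
- apply/forallP => A; apply/implyP; rewrite inE => /andP [_ hA].
  apply/forallP => B; apply/implyP; rewrite inE => /andP [_ hB].
  by apply/set0Pn; exists x0; rewrite in_setI hA hB.
have -> : St = (fun B' => x0 |: B') @:
          [set B' : {set 'I_m} | B' \subset seg m n :\ x0 & #|B'| == j].
  apply/setP => B; apply/idP/imsetP.
    rewrite inE in_ks => /andP [/andP [/eqP cB hBs] hx].
    exists (B :\ x0); last by rewrite setD1K.
    rewrite inE setSD //=; apply/eqP; move: cB; rewrite (cardsD1 x0) hx add1n; by case.
  case=> B' hB' ->; move: hB'; rewrite inE => /andP [hB's /eqP cB'].
  have nx : x0 \notin B' by apply/negP => /(subsetP hB's); rewrite in_setD1 eqxx.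
  rewrite inE in_ks cardsU1 nx cB' setU11 andbT; apply/andP; split; first by apply/eqP; lia.
  rewrite subUset sub1set x0S /=; exact: subset_trans hB's (subD1set _ _).
rewrite card_in_imset; last first.
  move=> B1 B2; rewrite !inE => /andP [h1 _] /andP [h2 _] e.
  have n1 : x0 \notin B1 by apply/negP => /(subsetP h1); rewrite in_setD1 eqxx.
  have n2 : x0 \notin B2 by apply/negP => /(subsetP h2); rewrite in_setD1 eqxx.
  by rewrite -(setU1K n1) -(setU1K n2) e.
rewrite cards_draws; congr 'C(_, _).
have := cardsD1 x0 (seg m n); rewrite x0S card_seg // add1n => e.
by rewrite [X in _ = X.-1]e.
Qed.

Lemma full_of_cnt m n (F : {set {set 'I_m}}) B : n <= m ->
  cnt m n F B = m - n -> forall b : 'I_m, n <= b -> B :|: [set b] \in F.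
Proof.
move=> Hnm; rewrite /cnt => c b hb.
have : [set b in Ob m n | B :|: [set b] \in F] == Ob m n.
  rewrite eqEcard card_Ob // c leqnn andbT.
  by apply/subsetP => x; rewrite inE => /andP [].
move/eqP/setP/(_ b); rewrite !inE hb /=; by move->.
Qed.

Lemma half_bound m n k (G : {set {set 'I_m}}) : n + 2 = k + k -> n <= m ->
  G \subset ksubsets m n k.-1 -> intersecting G ->
  2 * #|G| <= #|ksubsets m n k.-1|.
Proof.
move=> Hn Hnm HG HI.
set G' := (fun B => seg m n :\: B) @: G.
have cG' : #|G'| = #|G|.
  apply: card_in_imset => B1 B2 h1 h2 e.
  by rewrite -(compl_ks Hn Hnm (subsetP HG _ h1)).2 -(compl_ks Hn Hnm (subsetP HG _ h2)).2 e.
have d : G :&: G' = set0.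
  apply/setP => B; rewrite in_setI in_set0; apply/negP => /andP [hB /imsetP [B' hB' e]].
  move: (inter_pair HI hB hB'); rewrite e; apply/negP; rewrite negbK.
  apply/eqP/setP => x; rewrite in_setI in_setD in_set0.
  by case: (x \in B'); rewrite ?andbF.
have sU : G :|: G' \subset ksubsets m n k.-1.
  rewrite subUset HG /=; apply/subsetP => B /imsetP [B' hB' ->].
  by have [] := compl_ks Hn Hnm (subsetP HG _ hB').
have := subset_leq_card sU; have := cardsU G G'; rewrite d cards0 cG'. lia.
Qed.

Lemma binmid j : 'C((j + j).+2, j.+1) = 2 * 'C((j + j).+1, j).
Proof.
have e1 : (j + j).+1 - j = j.+1 by lia.
have := @bin_sub (j + j).+1 j; rewrite e1 => e; rewrite binS e; last by lia.
by rewrite mul2n addnn.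
Qed.

Lemma main_gen m n k : 2 <= k -> n + 2 = k + k -> k + k < m ->
  alpha m n k = h m n k /\
  forall F : {set {set 'I_m}},
    mnk_intersecting m n k F ->
    #|F| = alpha m n k ->
    exists Fstar : {set {set 'I_m}},
      [/\ Fstar \subset ksubsets m n k.-1,
          intersecting Fstar,
          (forall G : {set {set 'I_m}},
             G \subset ksubsets m n k.-1 -> intersecting G ->
             #|G| <= #|Fstar|) &
          F = Fam m n k Fstar].
Proof.
move=> Hk Hn Hm.
have Hnm : n <= m by lia.
have HO : 3 <= m - n by lia.
have HO2 : 2 <= m - n by lia.
set t := m - n.
have [j ej] : exists j, k = j.+2 by exists k.-2; lia.
have en : n = (j + j).+2 by lia.
have Hh : h m n k = 'C(n, k) + 'C(n.-1, k.-2) * t.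
  rewrite /h (_ : 2 * k - n = 2); last by lia.
  rewrite big_nat1 bin1 /t; congr (_ + 'C(_, _) * _); lia.
have HKr : #|ksubsets m n k.-1| = 2 * 'C(n.-1, k.-2).
  by rewrite card_ks // en ej /= binmid.
set C := 'C(n.-1, k.-2) in Hh HKr.
have bound : forall F, mnk_intersecting m n k F -> #|F| <= h m n k.
  move=> F /and3P [HI HK HFs].
  have cF := count_F Hnm Hn HI HK HFs.
  have up := upper Hn Hnm HO2 HI; rewrite HKr in up.
  rewrite cF Hh card_ks //; lia.
have Halpha : alpha m n k = h m n k.
  apply/eqP; rewrite eqn_leq; apply/andP; split.
    by apply/bigmax_leqP => F; apply: bound.
  have x0n : 0 < n by lia.
  have [S1 S2 S3] := @star_props m n k (Ordinal (leq_trans x0n Hnm)) Hn Hk Hnm x0n.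
  set St := [set B in _ | _] in S1 S2 S3.
  have HF0 := fam_mnk Hn Hnm S1 S2.
  apply: leq_trans (leq_bigmax_cond _ HF0).
  case/and3P: (HF0) => HI HK HFs.
  rewrite (count_F Hnm Hn HI HK HFs).
  rewrite (eq_bigr (fun B => if B \in St then t else 0)); last first.
    by move=> B hB; rewrite cnt_fam.
  by rewrite sum_if // S3 Hh card_ks.
split => // F HF; rewrite Halpha => cF.
case/and3P: (HF) => HI HK HFs.
have cF2 := count_F Hnm Hn HI HK HFs.
set S := \sum_(B in _) _ in cF2.
have ES : 2 * S = t * #|ksubsets m n k.-1|.
  rewrite HKr; move: cF2; rewrite cF Hh card_ks //; lia.
have ext := extremal Hn Hnm HO HI ES.
set Fstar := [set B in ksubsets m n k.-1 | cnt m n F B == t].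
have Fs1 : Fstar \subset ksubsets m n k.-1 by apply/subsetP => B; rewrite inE => /andP [].
have full : forall B, B \in Fstar -> forall b : 'I_m, n <= b -> B :|: [set b] \in F.
  move=> B; rewrite inE => /andP [_ /eqP c]; exact: full_of_cnt.
have Fs2 : intersecting Fstar.
  have hb1 : n < m by lia.
  have hb2 : n.+1 < m by lia.
  apply/forallP => A; apply/implyP => hA; apply/forallP => B; apply/implyP => hB.
  have hAs : A \subset seg m n by move: (subsetP Fs1 A hA); rewrite in_ks => /andP [].
  have hBs : B \subset seg m n by move: (subsetP Fs1 B hB); rewrite in_ks => /andP [].
  have f1 := full A hA (Ordinal hb1) (leqnn n).
  have f2 := full B hB (Ordinal hb2) (leqnSn n).
  have /set0Pn [z] := inter_pair HI f1 f2.
  rewrite !in_setI !in_setU !in_set1.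
  move=> /andP [/orP [zA | /eqP zx] /orP [zB | /eqP zy]].
  - by apply/set0Pn; exists z; rewrite in_setI zA zB.
  - by move: (subsetP hAs z zA); rewrite zy /seg inE /= => /ltnW; rewrite ltnn.
  - by move: (subsetP hBs z zB); rewrite zx /seg inE /= ltnn.
  - by move: zy; rewrite zx => /(congr1 val) /=; lia.
have cFs : 2 * #|Fstar| = #|ksubsets m n k.-1|.
  have eS : S = #|Fstar| * t.
    rewrite /S -(sum_if t Fs1); apply: eq_bigr => B hB.
    rewrite inE hB /=; case: (ext B hB) => ->; rewrite ?eqxx //.
    by case: eqP => //; lia.
  apply/eqP; rewrite -(eqn_pmul2r (_ : 0 < t)); last by lia.
  by rewrite -mulnA -eS ES mulnC.
exists Fstar; split => //.
  move=> G HG HIG; have := half_bound Hn Hnm HG HIG; lia.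
apply/setP => A; apply/idP/idP.
  move=> hA; case: (boolP (A \in ksubsets m n k)) => hAK.
    by rewrite in_setU hAK.
  have [hB [b [hb eA]]] := struct Hnm Hn HI HK HFs hA hAK.
  set B := A :&: seg m n in hB eA.
  have hBF : B \in Fstar.
    rewrite inE hB /=.
    have : b \in [set b in Ob m n | B :|: [set b] \in F] by rewrite inE hb -eA hA.
    move=> hbX; case: (ext B hB) => [c0|->//].
    by move: c0; rewrite /cnt => /eqP; rewrite cards_eq0 => /eqP e; rewrite e in_set0 in hbX.
  rewrite in_setU; apply/orP; right; apply/imset2P; exists B b => //.
move/fam_cases => [hK | [B [b [hB hb ->]]]]; first exact: (subsetP HK).
exact: full.
Qed.

Theorem theorem9 (k m : nat) :
  2 <= k -> 2 * k < m ->
  alpha m (2 * k - 2) k = h m (2 * k - 2) k /\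
  forall F : {set {set 'I_m}},
    mnk_intersecting m (2 * k - 2) k F ->
    #|F| = alpha m (2 * k - 2) k ->
    exists Fstar : {set {set 'I_m}},
      [/\ Fstar \subset ksubsets m (2 * k - 2) (k - 1),
          intersecting Fstar,
          (forall G : {set {set 'I_m}},
             G \subset ksubsets m (2 * k - 2) (k - 1) -> intersecting G ->
             #|G| <= #|Fstar|) &
          F = ksubsets m (2 * k - 2) k :|:
              [set A :|: [set b] | A in Fstar, b in [set b : 'I_m | 2 * k - 2 <= b]]].
Proof.
move=> Hk Hm.
have [H1 H2] := @main_gen m (2 * k - 2) k Hk ltac:(lia) ltac:(lia).
split => // F HF cF.
have [Fs [a b c d]] := H2 F HF cF.
exists Fs; rewrite subn1; split => //.
Qed.
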